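(* Let $\mathcal{C}$ be a small category in which no composite of non-identity morphisms is an identity, and let $M$ be a $k\mathcal{C}$-module such that $[M]$ is a $0$-cocycle in $\mathsf{E}^0(\mathcal{C},k)$, i.e. $\partial_0^*M\cong\partial_1^*M$ as $k\mathcal{E}^{\mathcal{C}}_1$-modules. Then for every square-component $\mathcal{M}$ of $\mathcal{C}$ containing at least two distinct (non-identity) morphisms, $M(u)$ is an isomorphism for every $u\in\mathcal{M}$.
   Context: A $k\mathcal{C}$-module is a functor from $\mathcal{C}$ to finite-dimensional $k$-vector spaces ($k$ a field); $F^*M=M\circ F$. $\mathcal{E}^{\mathcal{C}}_1$ is the category whose objects are the non-identity morphisms $u:a\to b$ of $\mathcal{C}$ (written $[u]$), and whose morphisms $[u]\to[v]$ (with $v:c\to d$) are pairs $(f_0,f_1)$, $f_0:a\to c$, $f_1:b\to d$, with $f_1u=vf_0$. The functors $\partial_0,\partial_1:\mathcal{E}^{\mathcal{C}}_1\to\mathcal{C}$ are $\partial_0[u]=b$, $\partial_0(f_0,f_1)=f_1$ and $\partial_1[u]=a$, $\partial_1(f_0,f_1)=f_0$. (This is the degree-1 part of the semi-simplicial object $\mathcal{E}^{\mathcal{C}}_\bullet$ of non-degenerate strings, whose degree-0 part is $\mathcal{C}$; $\mathsf{E}^0(\mathcal{C},k)$ is the kernel of $d^0=\partial_0^*-\partial_1^*$ on the split Grothendieck group of $k\mathcal{C}$-modules.) A set of non-identity morphisms of $\mathcal{C}$ is a square-component if the full subcategory of $\mathcal{E}^{\mathcal{C}}_1$ on it is a connected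 component of $\mathcal{E}^{\mathcal{C}}_1$. *)

(* Defs.v *)
From HB Require Import structures.
From mathcomp Require Import all_boot all_algebra.
From Stdlib Require Import Relations.
Set Implicit Arguments. Unset Strict Implicit. Unset Printing Implicit Defensive.
Import GRing.Theory.
Local Open Scope ring_scope.

Record category := Category {
  Ob : Type;
  Hom : Ob -> Ob -> Type;
  idm : forall a, Hom a a;
  comp : forall a b c, Hom b c -> Hom a b -> Hom a c;
  comp_assoc : forall a b c d (h : Hom c d) (g : Hom b c) (f : Hom a b),
      comp h (comp g f) = comp (comp h g) f;
  comp_id_l : forall a b (f : Hom a b), comp (idm b) f = f;
  comp_id_r : forall a b (f : Hom a b), comp f (idm a) = f
}.
Arguments idm {c} a : rename.
Arguments comp {c} {a b c0} _ _ : rename.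

Record arrow (C : category) := Arrow {
  asrc : Ob C; atgt : Ob C; amor : Hom asrc atgt }.
Arguments Arrow {C asrc atgt} amor.

Definition is_identity (C : category) (u : arrow C) : Prop :=
  exists a : Ob C, u = Arrow (idm a).

Definition no_composite_identity (C : category) : Prop :=
  forall (a b : Ob C) (f : Hom a b) (g : Hom b a),
    ~ is_identity (Arrow f) -> ~ is_identity (Arrow g) -> comp g f <> idm a.

(* A kC-module: a functor C -> finite-dimensional k-vector spaces,
   with k^n identified with row vectors 'rV_n and linear maps with matrices
   acting on the right (so M(g o f) = M f *m M g). *)
Record kmodule (k : fieldType) (C : category) := KModule {
  mdim : Ob C -> nat;
  mmap : forall a b, Hom a b -> 'M[k]_(mdim a, mdim b);
  mmap_id : forall a, mmap (idm a) = 1%:M;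
  mmap_comp : forall a b c (g : Hom b c) (f : Hom a b),
      mmap (comp g f) = mmap f *m mmap g
}.
Arguments mmap {k C} _ {a b} _.
Arguments mdim {k C} _ _.

Definition mx_iso (k : fieldType) m n (A : 'M[k]_(m, n)) : Prop :=
  exists B : 'M[k]_(n, m), A *m B = 1%:M /\ B *m A = 1%:M.

(* Morphisms [u] -> [v] in E_1^C : pairs (f0, f1) with f1 u = v f0. *)
Definition E1_hom (C : category) (u v : arrow C) : Type :=
  { f : Hom (asrc u) (asrc v) * Hom (atgt u) (atgt v)
  | comp f.2 (amor u) = comp (amor v) f.1 }.

(* d_0^* M ~= d_1^* M as kE_1^C-modules: a natural isomorphism
   phi_[u] : M(target u) -> M(source u) for every object [u] of E_1^C
   (values of phi at identity arrows are irrelevant). *)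
Definition boundary_iso (k : fieldType) (C : category) (M : kmodule k C) : Prop :=
  exists phi : forall u : arrow C, 'M[k]_(mdim M (atgt u), mdim M (asrc u)),
    (forall u, ~ is_identity u -> mx_iso (phi u)) /\
    (forall u v, ~ is_identity u -> ~ is_identity v ->
       forall f : E1_hom u v,
         mmap M (sval f).2 *m phi v = phi u *m mmap M (sval f).1).

Definition E1_adj (C : category) (u v : arrow C) : Prop :=
  ~ is_identity u /\ ~ is_identity v /\ (inhabited (E1_hom u v) \/ inhabited (E1_hom v u)).

(* A set S of non-identity morphisms is a square-component: the full
   subcategory of E_1^C on S is a connected component of E_1^C, i.e. it is
   nonempty, connected (zigzags inside S), and closed under morphisms of E_1^C. *)
Definition square_component (C : category) (S : arrow C -> Prop) : Prop :=
  (forall u, S u -> ~ is_identity u) /\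
  (exists u, S u) /\
  (forall u v, S u -> S v ->
     clos_refl_trans (arrow C) (fun x y => S x /\ S y /\ E1_adj x y) u v) /\
  (forall u v, S u -> E1_adj u v -> S v).

(* Main.v *)
Require Import Defs.
From mathcomp Require Import all_boot all_algebra.
From Stdlib Require Import Classical Relations.
Set Implicit Arguments. Unset Strict Implicit. Unset Printing Implicit Defensive.

Local Open Scope ring_scope.

Lemma id_elim (C : category) (P : forall b d : Ob C, Defs.Hom b d -> Prop)
  b d (f : Defs.Hom b d) : is_identity (Arrow f) -> (forall x, P x x (idm x)) -> P b d f.
Proof.
move=> [x E] H.
change (P (asrc (Arrow f)) (atgt (Arrow f)) (amor (Arrow f))).
rewrite E; exact: H.
Qed.

Lemma iso_mul (k : fieldType) m n p (A : 'M[k]_(m, n)) (B : 'M[k]_(n, p)) :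
  mx_iso A -> mx_iso B -> mx_iso (A *m B).
Proof.
move=> [A' [HA1 HA2]] [B' [HB1 HB2]]; exists (B' *m A'); split.
  by rewrite mulmxA -(mulmxA A) HB1 mulmx1 HA1.
by rewrite mulmxA -(mulmxA B') HA2 mulmx1 HB2.
Qed.

Lemma iso_solve (k : fieldType) m n p (X : 'M[k]_(m, n)) (P : 'M[k]_(n, p))
  (Q : 'M[k]_(m, p)) : X *m P = Q -> mx_iso P -> mx_iso Q ->
  mx_iso X.
Proof.
move=> E [P' [H1 H2]] HQ.
have -> : X = Q *m P' by rewrite -E -mulmxA H1 mulmx1.
apply: iso_mul => //; by exists P; split.
Qed.

Lemma iso_solve' (k : fieldType) m n p (X : 'M[k]_(n, p)) (P : 'M[k]_(m, n))
  (Q : 'M[k]_(m, p)) : Q = P *m X -> mx_iso P -> mx_iso Q ->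
  mx_iso X.
Proof.
move=> E [P' [H1 H2]] HQ.
have -> : X = P' *m Q by rewrite E mulmxA H2 mul1mx.
apply: iso_mul => //; by exists P; split.
Qed.

Lemma compnid (C : category) : no_composite_identity C ->
  forall (b d : Ob C) (h : Defs.Hom b d), is_identity (Arrow h) ->
  forall a (x : Defs.Hom b a) (w : Defs.Hom a d), Defs.comp w x = h ->
  ~ is_identity (Arrow x) -> ~ is_identity (Arrow w) -> False.
Proof.
move=> NC b d h Hid.
apply: (@id_elim C (fun b d h => forall a (x : Defs.Hom b a) (w : Defs.Hom a d),
  Defs.comp w x = h -> ~ is_identity (Arrow x) -> ~ is_identity (Arrow w) -> False)) => //.
move=> y a x w E nx nw; exact: (NC _ _ x w nx nw E).
Qed.

Lemma L (k : fieldType) (C : category) (M : kmodule k C) :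
  no_composite_identity C -> boundary_iso M ->
  forall (a b c : Ob C) (x : Defs.Hom c a) (w : Defs.Hom a b),
  ~ is_identity (Arrow x) -> ~ is_identity (Arrow w) ->
  mx_iso (mmap M x) /\ mx_iso (mmap M w).
Proof.
move=> NC [phi [Hiso Hnat]] a b c x w nx nw.
have nwx : ~ is_identity (Arrow (Defs.comp w x)).
  move=> H; exact: (@compnid C NC _ _ _ H _ x w erefl nx nw).
have pf1 : Defs.comp (idm c, w).2 (amor (Arrow x)) =
           Defs.comp (amor (Arrow (Defs.comp w x))) (idm c, w).1.
  by rewrite /= comp_id_r.
have pf2 : Defs.comp (x, idm b).2 (amor (Arrow (Defs.comp w x))) =
           Defs.comp (amor (Arrow w)) (x, idm b).1.
  by rewrite /= comp_id_l.
have E1 := Hnat _ _ nx nwx (exist _ (idm c, w) pf1).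
have E2 := Hnat _ _ nwx nw (exist _ (x, idm b) pf2).
simpl in E1, E2.
rewrite mmap_id mulmx1 in E1.
rewrite mmap_id mul1mx in E2.
split.
  apply: (iso_solve' E2); [exact: (Hiso _ nwx) | exact: (Hiso _ nw)].
apply: (iso_solve E1); [exact: (Hiso _ nwx) | exact: (Hiso _ nx)].
Qed.

Lemma caseF (k : fieldType) (C : category) (M : kmodule k C) :
  no_composite_identity C -> boundary_iso M ->
  forall (a b c d : Ob C) (u : Defs.Hom a b) (y : Defs.Hom c d)
    (f0 : Defs.Hom a c) (f1 : Defs.Hom b d),
  Defs.comp f1 u = Defs.comp y f0 -> ~ is_identity (Arrow u) ->
  ~ is_identity (Arrow y) -> Arrow u <> Arrow y -> mx_iso (mmap M u).
Proof.
move=> NC B a b c d u y f0 f1 E nu ny neq.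
case: (classic (is_identity (Arrow f1))) => [Hf1|nf1]; last first.
  by case: (L NC B nu nf1).
move: a c u y f0 E nu ny neq.
apply: (@id_elim C (fun b d f1 => forall (a c : Ob C) (u : Defs.Hom a b)
   (y : Defs.Hom c d) (f0 : Defs.Hom a c),
  Defs.comp f1 u = Defs.comp y f0 -> ~ is_identity (Arrow u) ->
  ~ is_identity (Arrow y) -> Arrow u <> Arrow y -> mx_iso (mmap M u)) b d f1 Hf1).
move=> x a c u y f0; rewrite comp_id_l => -> nu ny neq.
case: (classic (is_identity (Arrow f0))) => [Hf0|nf0].
  exfalso; clear nu ny; move: y neq.
  apply: (@id_elim C (fun a c f0 => forall (y : Defs.Hom c x),
     Arrow (Defs.comp y f0) <> Arrow y -> False) a c f0 Hf0).
  by move=> z y; rewrite comp_id_r.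
case: (L NC B nf0 ny) => H1 H2.
by rewrite mmap_comp; apply: iso_mul.
Qed.

Lemma caseB (k : fieldType) (C : category) (M : kmodule k C) :
  no_composite_identity C -> boundary_iso M ->
  forall (a b c d : Ob C) (u : Defs.Hom a b) (y : Defs.Hom c d)
    (f0 : Defs.Hom c a) (f1 : Defs.Hom d b),
  Defs.comp f1 y = Defs.comp u f0 -> ~ is_identity (Arrow u) ->
  ~ is_identity (Arrow y) -> Arrow u <> Arrow y -> mx_iso (mmap M u).
Proof.
move=> NC B a b c d u y f0 f1 E nu ny neq.
case: (classic (is_identity (Arrow f0))) => [Hf0|nf0]; last first.
  by case: (L NC B nf0 nu).
move: b d u y f1 E nu ny neq.
apply: (@id_elim C (fun c a f0 => forall (b d : Ob C) (u : Defs.Hom a b)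
   (y : Defs.Hom c d) (f1 : Defs.Hom d b),
  Defs.comp f1 y = Defs.comp u f0 -> ~ is_identity (Arrow u) ->
  ~ is_identity (Arrow y) -> Arrow u <> Arrow y -> mx_iso (mmap M u)) c a f0 Hf0).
move=> x b d u y f1; rewrite comp_id_r => <- nu ny neq.
case: (classic (is_identity (Arrow f1))) => [Hf1|nf1].
  exfalso; clear nu ny; move: y neq.
  apply: (@id_elim C (fun d b f1 => forall (y : Defs.Hom x d),
     Arrow (Defs.comp f1 y) <> Arrow y -> False) d b f1 Hf1).
  by move=> z y; rewrite comp_id_l.
case: (L NC B ny nf1) => H1 H2.
by rewrite mmap_comp; apply: iso_mul.
Qed.

Lemma neighbor (T : Type) (R : T -> T -> Prop) x z :
  clos_refl_trans T R x z -> x <> z -> exists y, R x y /\ y <> x.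
Proof.
move=> H; have {H} := clos_rt_rt1n _ _ _ _ H.
elim=> [y neq|x0 y z0 Rxy _ IH neq]; first by [].
case: (classic (y = x0)) => [eq|ne]; last by exists y.
subst y; exact: IH.
Qed.

Theorem proposition4p1 (k : fieldType) (C : category) (M : kmodule k C) :
  no_composite_identity C ->
  boundary_iso M ->
  forall S : arrow C -> Prop,
    square_component S ->
    (exists u v, S u /\ S v /\ u <> v) ->
    forall u, S u -> mx_iso (mmap M (amor u)).
Proof.
move=> NC B S [Snid [_ [Sconn Sclos]]] [u0 [v0 [Su0 [Sv0 nuv]]]] u Su.
have [w [Sw nw]] : exists w, S w /\ u <> w.
  case: (classic (u = u0)) => [->|ne]; first by exists v0.
  by exists u0.
have [y [[_ [_ [nu [ny Hadj]]]] nyu]] := neighbor (Sconn _ _ Su Sw) nw.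
move: nu ny nyu Hadj; case: u {Su nw} => a b u; case: y => c d y /= nu ny nyu.
case=> [[[[f0 f1] /= E]]|[[[f0 f1] /= E]]].
  by apply: (caseF NC B E nu ny) => H; apply: nyu.
by apply: (caseB NC B E nu ny) => H; apply: nyu.
Qed.
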